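(* Define $\alpha_n(q)$ (written $a_n(q^2)$ in the original) recursively by $\alpha_0(q)=0$ and $\alpha_n(q) = q^n +(1-q^{2n-2})\alpha_{n-1}(q)$ for $n\in\mathbb{N}$. Then for $q\in\mathbb{C}$ with $0<|q|<1$, \[ q^{-1}\lim_{n\to \infty} \alpha_n(q) = \frac{\left(q^2;q^2\right)_\infty}{\left(q;q^2\right)_\infty} = \sum_{n\geq 0} q^{\frac{n(n+1)}{2}} . \]
   Context: For $n\in\mathbb{N}_0\cup\{\infty\}$, $(a;q)_n := \prod_{j=0}^{n-1}(1-aq^j)$. *)

(* Defs.v *)
From Stdlib Require Import Reals.
From Coquelicot Require Import Coquelicot.
Open Scope C_scope.

(* alpha_n(q):  alpha_0 = 0,  alpha_n = q^n + (1 - q^(2n-2)) alpha_{n-1}.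
   For n = m+1: 2n-2 = 2m. *)
Fixpoint alpha (q : C) (n : nat) : C :=
  match n with
  | O => 0
  | S m => q ^ (S m) + (1 - q ^ (2 * m)) * alpha q m
  end.

Fixpoint qpoch (a q : C) (n : nat) : C :=
  match n with
  | O => 1
  | S m => qpoch a q m * (1 - a * q ^ m)
  end.

Definition qpoch_inf_is (a q P : C) : Prop :=
  filterlim (qpoch a q) eventually (locally P).

(* Main.v *)
Require Import Defs.
From Stdlib Require Import Reals Lra Lia.
From Coquelicot Require Import Coquelicot.
Open Scope C_scope.

Definition cv (u : nat -> C) (l : C) : Prop :=
  forall eps : R, (0 < eps)%R -> exists N, forall n, (N <= n)%nat -> (Cmod (u n - l) < eps)%R.

Lemma cv_filterlim u l : cv u l -> filterlim u eventually (locally l).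
Proof.
  intros H. apply filterlim_locally. intros eps.
  destruct (H eps (cond_pos eps)) as [N HN]. exists N. intros n Hn.
  apply (norm_compat1 (V:=C_NormedModule)). exact (HN n Hn).
Qed.

Lemma filterlim_cv u l : filterlim u eventually (locally l) -> cv u l.
Proof.
  intros H eps Heps.
  assert (Hf := norm_factor_gt_0 (V:=C_NormedModule)).
  set (e := mkposreal (eps / norm_factor (V:=C_NormedModule)) ltac:(apply Rdiv_lt_0_compat; auto)).
  apply filterlim_locally with (eps := e) in H.
  destruct H as [N HN]. exists N. intros n Hn.
  specialize (HN n Hn). apply (norm_compat2 (V:=C_NormedModule)) in HN.
  simpl in HN. change (Cmod (u n - l)) with (norm (minus (u n) l)).
  replace eps with (norm_factor (V:=C_NormedModule) * (eps / norm_factor (V:=C_NormedModule)))%R.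
  exact HN. field. lra.
Qed.

Lemma cauchy_cv u :
  (forall eps, (0 < eps)%R -> exists N, forall m n, (N <= m)%nat -> (N <= n)%nat -> (Cmod (u m - u n) < eps)%R) ->
  exists l, cv u l.
Proof.
  intros H.
  destruct (proj1 (filterlim_locally_cauchy (U := CompleteNormedModule.CompleteSpace _ C_CompleteNormedModule) (F := eventually) u)) as [l Hl].
  - intros eps. destruct (H eps (cond_pos eps)) as [N HN].
    exists (fun n => (N <= n)%nat). split. exists N. auto.
    intros a b Ha Hb. apply (norm_compat1 (V:=C_NormedModule)). exact (HN b a Hb Ha).
  - exists l. apply filterlim_cv. exact Hl.
Qed.
Lemma Cmod_sub_sym a b : Cmod (a - b) = Cmod (b - a).
Proof. replace (a - b) with (- (b - a)) by ring. apply Cmod_opp. Qed.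

Lemma Cmod_tri3 a b : (Cmod (a - b) <= Cmod a + Cmod b)%R.
Proof. unfold Cminus. rewrite <- (Cmod_opp b). apply Cmod_triangle. Qed.

Lemma cv_unique u l1 l2 : cv u l1 -> cv u l2 -> l1 = l2.
Proof.
  intros H1 H2.
  assert (Hz : Cmod (l1 - l2) = 0%R).
  { destruct (Rle_lt_or_eq_dec 0 (Cmod (l1 - l2)) (Cmod_ge_0 _)) as [Hp|Hp]; [|auto].
    exfalso. set (e := (Cmod (l1 - l2) / 2)%R).
    destruct (H1 e ltac:(unfold e; lra)) as [N1 HN1].
    destruct (H2 e ltac:(unfold e; lra)) as [N2 HN2].
    specialize (HN1 (N1 + N2)%nat ltac:(lia)). specialize (HN2 (N1 + N2)%nat ltac:(lia)).
    assert (Ht := Cmod_triangle (l1 - u (N1+N2)%nat) (u (N1+N2)%nat - l2)).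
    replace (l1 - u (N1+N2)%nat + (u (N1+N2)%nat - l2)) with (l1 - l2) in Ht by ring.
    rewrite (Cmod_sub_sym l1 (u (N1+N2)%nat)) in Ht. unfold e in *. lra. }
  apply Cmod_eq_0 in Hz. apply (f_equal (fun z => z + l2)) in Hz. ring_simplify in Hz. exact Hz.
Qed.

Lemma cv_const c : cv (fun _ => c) c.
Proof. intros eps He. exists 0%nat. intros. replace (c - c) with (0 : C) by ring. rewrite Cmod_0. lra. Qed.

Lemma cv_ext u v l : (forall n, u n = v n) -> cv u l -> cv v l.
Proof. intros E H eps He. destruct (H eps He) as [N HN]. exists N. intros n Hn. rewrite <- E. auto. Qed.

Lemma cv_plus u v l m : cv u l -> cv v m -> cv (fun n => u n + v n) (l + m).
Proof.
  intros H1 H2 eps He.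
  destruct (H1 (eps/2)%R ltac:(lra)) as [N1 HN1].
  destruct (H2 (eps/2)%R ltac:(lra)) as [N2 HN2].
  exists (N1 + N2)%nat. intros n Hn.
  specialize (HN1 n ltac:(lia)). specialize (HN2 n ltac:(lia)).
  replace (u n + v n - (l + m)) with ((u n - l) + (v n - m)) by ring.
  assert (Ht := Cmod_triangle (u n - l) (v n - m)). lra.
Qed.

Lemma cv_opp u l : cv u l -> cv (fun n => - u n) (- l).
Proof.
  intros H eps He. destruct (H eps He) as [N HN]. exists N. intros n Hn.
  replace (- u n - - l) with (- (u n - l)) by ring. rewrite Cmod_opp. auto.
Qed.

Lemma cv_minus u v l m : cv u l -> cv v m -> cv (fun n => u n - v n) (l - m).
Proof. intros. apply cv_plus; auto. apply cv_opp; auto. Qed.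

Lemma cv_mult u v l m : cv u l -> cv v m -> cv (fun n => u n * v n) (l * m).
Proof.
  intros H1 H2 eps He.
  assert (Hl := Cmod_ge_0 l). assert (Hm := Cmod_ge_0 m).
  set (d1 := (eps / (2 * (Cmod m + 1)))%R).
  set (d2 := Rmin 1 (eps / (2 * (Cmod l + 1)))%R).
  assert (Hd1 : (0 < d1)%R) by (unfold d1; apply Rdiv_lt_0_compat; lra).
  assert (Hd2 : (0 < d2)%R) by (unfold d2; apply Rmin_glb_lt; [lra| apply Rdiv_lt_0_compat; lra]).
  destruct (H1 d1 Hd1) as [N1 HN1].
  destruct (H2 d2 Hd2) as [N2 HN2].
  exists (N1 + N2)%nat. intros n Hn.
  specialize (HN1 n ltac:(lia)). specialize (HN2 n ltac:(lia)).
  replace (u n * v n - l * m) with ((u n - l) * v n + l * (v n - m)) by ring.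
  eapply Rle_lt_trans. apply Cmod_triangle. rewrite !Cmod_mult.
  assert (Hv : (Cmod (v n) <= Cmod m + 1)%R).
  { replace (v n) with ((v n - m) + m) by ring.
    eapply Rle_trans. apply Cmod_triangle. assert (d2 <= 1)%R by apply Rmin_l. lra. }
  assert (A1 : (Cmod (u n - l) * Cmod (v n) <= d1 * (Cmod m + 1))%R).
  { apply Rmult_le_compat; try apply Cmod_ge_0; lra. }
  assert (A2 : (Cmod l * Cmod (v n - m) <= Cmod l * d2)%R).
  { apply Rmult_le_compat_l; lra. }
  assert (E1 : (d1 * (Cmod m + 1) = eps / 2)%R) by (unfold d1; field; lra).
  assert (E2 : (Cmod l * d2 < eps / 2)%R).
  { assert (d2 <= eps / (2 * (Cmod l + 1)))%R by apply Rmin_r.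
    apply Rle_lt_trans with (Cmod l * (eps / (2 * (Cmod l + 1))))%R.
    apply Rmult_le_compat_l; lra.
    replace (Cmod l * (eps / (2 * (Cmod l + 1))))%R with ((eps/2) * (Cmod l / (Cmod l + 1)))%R by (field; lra).
    assert (Cmod l / (Cmod l + 1) < 1)%R.
    { apply (Rmult_lt_reg_r (Cmod l + 1)). lra. unfold Rdiv. rewrite Rmult_assoc, Rinv_l; lra. }
    nra. }
  lra.
Qed.

Lemma cv_inv (u : nat -> C) (l : C) : l <> 0 -> cv u l -> cv (fun n => / u n) (/ l).
Proof.
  intros Hl0 H eps He.
  assert (Hl : (0 < Cmod l)%R) by (apply (proj1 (Cmod_gt_0 l)); exact Hl0).
  set (d := (Rmin (Cmod l / 2) (eps * (Cmod l * Cmod l) / 2))%R).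
  assert (Hd : (0 < d)%R) by (unfold d; apply Rmin_glb_lt; [lra| ]; apply Rdiv_lt_0_compat; [apply Rmult_lt_0_compat; nra|lra]).
  destruct (H d Hd) as [N HN]. exists N. intros n Hn. specialize (HN n Hn).
  assert (Hd1 : (d <= Cmod l / 2)%R) by apply Rmin_l.
  assert (Hd2 : (d <= eps * (Cmod l * Cmod l) / 2)%R) by apply Rmin_r.
  assert (Hu : (Cmod l / 2 <= Cmod (u n))%R).
  { assert (Ht := Cmod_triangle (l - u n) (u n)). replace (l - u n + u n) with l in Ht by ring.
    rewrite (Cmod_sub_sym l (u n)) in Ht. lra. }
  assert (Hu0 : u n <> 0). { intro E. rewrite E, Cmod_0 in Hu. lra. }
  replace (/ u n - / l) with ((l - u n) / (u n * l)) by (field; auto).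
  rewrite Cmod_div by (apply Cmult_neq_0; auto). rewrite Cmod_mult, Cmod_sub_sym.
  apply (Rmult_lt_reg_r (Cmod (u n) * Cmod l)). nra.
  unfold Rdiv. rewrite Rmult_assoc, Rinv_l by nra. rewrite Rmult_1_r.
  apply Rlt_le_trans with d. auto.
  apply Rle_trans with (eps * (Cmod l * Cmod l) / 2)%R. auto.
  assert (0 <= eps * Cmod l * (Cmod (u n) - Cmod l / 2))%R.
  { apply Rmult_le_pos; nra. }
  nra.
Qed.

Lemma cv_comp u l g k : cv u l -> (forall n, (n <= g n + k)%nat) -> cv (fun n => u (g n)) l.
Proof.
  intros H Hg eps He. destruct (H eps He) as [N HN]. exists (N + k)%nat. intros n Hn.
  apply HN. specialize (Hg n). lia.
Qed.

Lemma cv_S u l : cv (fun n => u (S n)) l -> cv u l.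
Proof.
  intros H eps He. destruct (H eps He) as [N HN]. exists (S N). intros n Hn.
  destruct n. lia. apply HN. lia.
Qed.

Lemma cv_bound u l a b : cv u l -> (forall n, (Cmod (u n - a) <= b)%R) -> (Cmod (l - a) <= b)%R.
Proof.
  intros H Hb. apply Rnot_lt_le. intro Hlt.
  set (e := (Cmod (l - a) - b)%R).
  destruct (H e ltac:(unfold e; lra)) as [N HN]. specialize (HN N (le_n _)).
  specialize (Hb N).
  assert (Ht := Cmod_triangle (l - u N) (u N - a)). replace (l - u N + (u N - a)) with (l - a) in Ht by ring.
  rewrite (Cmod_sub_sym l (u N)) in Ht. unfold e in *. lra.
Qed.

Lemma cv_lower u l c : cv u l -> (forall n, (c <= Cmod (u n))%R) -> (c <= Cmod l)%R.
Proof.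
  intros H Hb. apply Rnot_lt_le. intro Hlt.
  set (e := (c - Cmod l)%R).
  destruct (H e ltac:(unfold e; lra)) as [N HN]. specialize (HN N (le_n _)).
  specialize (Hb N).
  assert (Ht := Cmod_triangle (u N - l) l). replace (u N - l + l) with (u N) in Ht by ring.
  unfold e in *. lra.
Qed.

Lemma geom_small (x : R) : (0 <= x < 1)%R -> forall eps, (0 < eps)%R -> exists N, forall n, (N <= n)%nat -> (x ^ n < eps)%R.
Proof.
  intros Hx eps He. destruct (pow_lt_1_zero x ltac:(rewrite Rabs_pos_eq; lra) eps He) as [N HN].
  exists N. intros n Hn. specialize (HN n Hn). rewrite Rabs_pos_eq in HN. auto. apply pow_le. lra.
Qed.

Lemma cv_geom u l K x : (0 <= x < 1)%R -> (forall n, (Cmod (u n - l) <= K * x ^ n)%R) -> cv u l.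
Proof.
  intros Hx Hb eps He.
  assert (HK : (0 <= K)%R). { specialize (Hb 0%nat). simpl in Hb. assert (Hc := Cmod_ge_0 (u 0%nat - l)). lra. }
  destruct (geom_small x Hx (eps / (K + 1))%R ltac:(apply Rdiv_lt_0_compat; lra)) as [N HN].
  exists N. intros n Hn. specialize (HN n Hn). eapply Rle_lt_trans. apply Hb.
  apply Rle_lt_trans with ((K+1) * x ^ n)%R. assert (0 <= x ^ n)%R by (apply pow_le; lra). nra.
  apply (Rmult_lt_reg_r (/ (K+1))). apply Rinv_0_lt_compat. lra.
  replace ((K + 1) * x ^ n * / (K + 1))%R with (x ^ n)%R by (field; lra). exact HN.
Qed.
Lemma incr_bound (u : nat -> C) (K x : R) : (0 <= x < 1)%R ->
  (forall n, (Cmod (u (S n) - u n) <= K * x ^ n)%R) ->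
  forall n k, (Cmod (u (n + k)%nat - u n) <= K * x ^ n * (1 - x ^ k) / (1 - x))%R.
Proof.
  intros Hx Hb n k. induction k.
  - rewrite Nat.add_0_r. replace (u n - u n) with (0:C) by ring. rewrite Cmod_0.
    simpl. replace (K * x ^ n * (1 - 1) / (1 - x))%R with 0%R by (field; lra). lra.
  - replace (u (n + S k)%nat - u n) with ((u (S (n + k)) - u (n + k)%nat) + (u (n + k)%nat - u n))
      by (rewrite Nat.add_succ_r; ring).
    eapply Rle_trans. apply Cmod_triangle.
    specialize (Hb (n + k)%nat). rewrite pow_add in Hb.
    replace (K * x ^ n * (1 - x ^ S k) / (1 - x))%R with (K * (x ^ n * x ^ k) + K * x ^ n * (1 - x ^ k) / (1 - x))%R
      by (simpl; field; lra).
    lra.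
Qed.

Lemma incr_cv (u : nat -> C) (K x : R) : (0 <= x < 1)%R ->
  (forall n, (Cmod (u (S n) - u n) <= K * x ^ n)%R) ->
  exists l, cv u l /\ forall n, (Cmod (u n - l) <= K * x ^ n / (1 - x))%R.
Proof.
  intros Hx Hb.
  assert (HK : (0 <= K)%R). { specialize (Hb 0%nat). simpl in Hb. assert (Hc := Cmod_ge_0 (u 1%nat - u 0%nat)). lra. }
  assert (Hm : forall n k, (Cmod (u (n + k)%nat - u n) <= K * x ^ n / (1 - x))%R).
  { intros n k. eapply Rle_trans. apply (incr_bound u K x Hx Hb).
    unfold Rdiv. apply Rmult_le_compat_r. apply Rlt_le, Rinv_0_lt_compat. lra.
    assert (0 <= x ^ k)%R by (apply pow_le; lra). assert (0 <= x ^ n)%R by (apply pow_le; lra).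
    assert (0 <= K * x ^ n)%R by (apply Rmult_le_pos; lra). nra. }
  destruct (cauchy_cv u) as [l Hl].
  - intros eps He.
    destruct (geom_small x Hx (eps * (1 - x) / (2 * (K + 1)))%R) as [N HN].
    { apply Rdiv_lt_0_compat. apply Rmult_lt_0_compat; lra. lra. }
    exists N. intros m n Hm' Hn'.
    assert (HxN := HN N (le_n _)).
    assert (Hg : (K * x ^ N / (1 - x) < eps / 2)%R).
    { apply Rle_lt_trans with ((K + 1) * x ^ N / (1 - x))%R.
      unfold Rdiv. apply Rmult_le_compat_r. apply Rlt_le, Rinv_0_lt_compat. lra.
      assert (0 <= x ^ N)%R by (apply pow_le; lra). nra.
      apply (Rmult_lt_reg_r ((1 - x) / (K + 1))). apply Rdiv_lt_0_compat; lra.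
      replace ((K + 1) * x ^ N / (1 - x) * ((1 - x) / (K + 1)))%R with (x ^ N)%R by (field; lra).
      replace (eps / 2 * ((1 - x) / (K + 1)))%R with (eps * (1 - x) / (2 * (K + 1)))%R by (field; lra).
      exact HxN. }
    assert (E1 := Hm N (m - N)%nat). assert (E2 := Hm N (n - N)%nat).
    replace (N + (m - N))%nat with m in E1 by lia. replace (N + (n - N))%nat with n in E2 by lia.
    replace (u m - u n) with ((u m - u N) - (u n - u N)) by ring.
    eapply Rle_lt_trans. apply Cmod_tri3. lra.
  - exists l. split. auto. intros n.
    assert (Hs : cv (fun k => u (n + k)%nat) l) by (apply cv_comp with (k := 0%nat); auto; intros; lia).
    assert (H := cv_bound _ _ (u n) (K * x ^ n / (1 - x))%R Hs (Hm n)).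
    rewrite Cmod_sub_sym. exact H.
Qed.

Lemma C1_nz : (1:C) <> 0.
Proof. intro E. apply (f_equal Cmod) in E. rewrite Cmod_1, Cmod_0 in E. lra. Qed.

Lemma exp_le_mono x y : (x <= y)%R -> (exp x <= exp y)%R.
Proof. intros [H|H]. left; apply exp_increasing; auto. subst; lra. Qed.

Lemma qpoch_S a r n : qpoch a r (S n) = qpoch a r n * (1 - a * r ^ n).
Proof. reflexivity. Qed.

Lemma qpoch_shift a r n : qpoch a r (S n) = (1 - a) * qpoch (a * r) r n.
Proof.
  revert a. induction n; intros a.
  - simpl. ring.
  - rewrite qpoch_S, IHn, qpoch_S. simpl. ring.
Qed.

Lemma qpoch_add a r m k : qpoch a r (m + k) = qpoch a r m * qpoch (a * r ^ m) r k.
Proof.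
  induction k.
  - rewrite Nat.add_0_r. simpl. ring.
  - rewrite Nat.add_succ_r, !qpoch_S, IHk, Cpow_add_r. ring.
Qed.

Lemma qpoch_nz a r n : (forall j, 1 - a * r ^ j <> 0) -> qpoch a r n <> 0.
Proof.
  intros H. induction n. simpl. apply C1_nz.
  rewrite qpoch_S. apply Cmult_neq_0; auto.
Qed.

Fixpoint Eb (b x : R) (k : nat) : R :=
  match k with O => 1%R | S k' => (Eb b x k' * (1 + b * x ^ k'))%R end.

Lemma Eb_nonneg b x k : (0 <= b)%R -> (0 <= x)%R -> (0 <= Eb b x k)%R.
Proof.
  intros Hb Hx. induction k. simpl; lra. simpl. assert (0 <= x ^ k)%R by (apply pow_le; lra).
  apply Rmult_le_pos. auto. assert (0 <= b * x ^ k)%R by (apply Rmult_le_pos; lra). lra.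
Qed.

Lemma Eb_le b x k : (0 <= b)%R -> (0 <= x < 1)%R -> (Eb b x k <= exp (b * (1 - x ^ k) / (1 - x)))%R.
Proof.
  intros Hb Hx. induction k.
  - simpl. replace (b * (1 - 1) / (1 - x))%R with 0%R by (field; lra). rewrite exp_0. lra.
  - simpl Eb. replace (b * (1 - x ^ S k) / (1 - x))%R with (b * (1 - x ^ k) / (1 - x) + b * x ^ k)%R by (simpl; field; lra).
    rewrite exp_plus. assert (0 <= x ^ k)%R by (apply pow_le; lra).
    assert (1 + b * x ^ k <= exp (b * x ^ k))%R.
    { destruct (Req_dec (b * x ^ k) 0) as [E|E]. rewrite E, exp_0. lra.
      left. apply exp_ineq1. assert (0 <= b * x ^ k)%R by (apply Rmult_le_pos; lra). lra. }
    assert (0 <= Eb b x k)%R by (apply Eb_nonneg; lra).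
    apply Rmult_le_compat; auto. assert (0 <= b * x ^ k)%R by (apply Rmult_le_pos; lra). lra.
Qed.

Lemma qpoch_near1_aux b r k : (Cmod (qpoch b r k - 1) <= Eb (Cmod b) (Cmod r) k - 1)%R.
Proof.
  induction k.
  - simpl. replace (1 - 1) with (0:C) by ring. rewrite Cmod_0. lra.
  - rewrite qpoch_S. simpl Eb.
    replace (qpoch b r k * (1 - b * r ^ k) - 1) with ((qpoch b r k - 1) - qpoch b r k * (b * r ^ k)) by ring.
    eapply Rle_trans. apply Cmod_tri3. rewrite !Cmod_mult, Cmod_pow.
    assert (Hq : (Cmod (qpoch b r k) <= Eb (Cmod b) (Cmod r) k)%R).
    { replace (qpoch b r k) with ((qpoch b r k - 1) + 1) by ring. eapply Rle_trans. apply Cmod_triangle.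
      rewrite Cmod_1. lra. }
    assert (0 <= Cmod b * Cmod r ^ k)%R by (apply Rmult_le_pos; [apply Cmod_ge_0| apply pow_le, Cmod_ge_0]).
    assert (Cmod (qpoch b r k) * (Cmod b * Cmod r ^ k) <= Eb (Cmod b) (Cmod r) k * (Cmod b * Cmod r ^ k))%R.
    { apply Rmult_le_compat_r; auto. }
    nra.
Qed.

Lemma qpoch_near1 b r k : (Cmod r < 1)%R -> (Cmod (qpoch b r k - 1) <= exp (Cmod b / (1 - Cmod r)) - 1)%R.
Proof.
  intros Hr. eapply Rle_trans. apply qpoch_near1_aux.
  assert (Hx : (0 <= Cmod r < 1)%R) by (split; [apply Cmod_ge_0|auto]).
  assert (H := Eb_le (Cmod b) (Cmod r) k (Cmod_ge_0 _) Hx).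
  assert (exp (Cmod b * (1 - Cmod r ^ k) / (1 - Cmod r)) <= exp (Cmod b / (1 - Cmod r)))%R.
  { apply exp_le_mono. unfold Rdiv. apply Rmult_le_compat_r. apply Rlt_le, Rinv_0_lt_compat. lra.
    assert (0 <= Cmod r ^ k)%R by (apply pow_le; lra). assert (Hb := Cmod_ge_0 b). nra. }
  lra.
Qed.

Lemma qpoch_bound a r n : (Cmod r < 1)%R -> (Cmod (qpoch a r n) <= exp (Cmod a / (1 - Cmod r)))%R.
Proof.
  intros Hr. assert (H := qpoch_near1 a r n Hr).
  replace (qpoch a r n) with ((qpoch a r n - 1) + 1) by ring. eapply Rle_trans. apply Cmod_triangle.
  rewrite Cmod_1. lra.
Qed.

Lemma qpoch_cv a r : (Cmod r < 1)%R -> exists P, cv (qpoch a r) P.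
Proof.
  intros Hr.
  destruct (incr_cv (qpoch a r) (exp (Cmod a / (1 - Cmod r)) * Cmod a)%R (Cmod r)) as [P [HP _]].
  - split; [apply Cmod_ge_0|auto].
  - intros n. rewrite qpoch_S.
    replace (qpoch a r n * (1 - a * r ^ n) - qpoch a r n) with (- (qpoch a r n * a * r ^ n)) by ring.
    rewrite Cmod_opp, !Cmod_mult, Cmod_pow.
    assert (H := qpoch_bound a r n Hr).
    assert (0 <= Cmod a * Cmod r ^ n)%R by (apply Rmult_le_pos; [apply Cmod_ge_0| apply pow_le, Cmod_ge_0]).
    nra.
  - exists P. auto.
Qed.

Lemma qpoch_lower a r : (Cmod r < 1)%R -> (forall j, 1 - a * r ^ j <> 0) ->
  exists c, (0 < c)%R /\ forall n, (c <= Cmod (qpoch a r n))%R.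
Proof.
  intros Hr Hnz.
  assert (Hx : (0 <= Cmod r < 1)%R) by (split; [apply Cmod_ge_0|auto]).
  assert (Hl : (0 < ln (3/2))%R).
  { rewrite <- ln_1. apply ln_increasing; lra. }
  destruct (geom_small (Cmod r) Hx (ln (3/2) * (1 - Cmod r) / (Cmod a + 1))%R) as [N HN].
  { apply Rdiv_lt_0_compat. apply Rmult_lt_0_compat; lra. assert (H := Cmod_ge_0 a). lra. }
  specialize (HN N (le_n _)).
  assert (Htail : forall k, (1/2 <= Cmod (qpoch (a * r ^ N) r k))%R).
  { intros k. assert (H := qpoch_near1 (a * r ^ N) r k Hr).
    assert (Hs : (Cmod (a * r ^ N) / (1 - Cmod r) <= ln (3/2))%R).
    { rewrite Cmod_mult, Cmod_pow.
      apply (Rmult_le_reg_r (1 - Cmod r)). lra.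
      unfold Rdiv. rewrite Rmult_assoc, Rinv_l by lra. rewrite Rmult_1_r.
      assert (Ha := Cmod_ge_0 a). assert (0 <= Cmod r ^ N)%R by (apply pow_le; lra).
      apply Rle_trans with ((Cmod a + 1) * Cmod r ^ N)%R. nra.
      apply Rle_trans with ((Cmod a + 1) * (ln (3 / 2) * (1 - Cmod r) / (Cmod a + 1)))%R.
      apply Rmult_le_compat_l; lra. apply Req_le. unfold Rdiv. field. lra. }
    apply exp_le_mono in Hs. rewrite exp_ln in Hs by lra.
    assert (Ht := Cmod_triangle (1 - qpoch (a * r ^ N) r k) (qpoch (a * r ^ N) r k)).
    replace (1 - qpoch (a * r ^ N) r k + qpoch (a * r ^ N) r k) with (1:C) in Ht by ring.
    rewrite Cmod_1, Cmod_sub_sym in Ht. lra. }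
  assert (Hinit : forall M, exists c, (0 < c)%R /\ forall n, (n <= M)%nat -> (c <= Cmod (qpoch a r n))%R).
  { induction M.
    - exists (Cmod (qpoch a r 0)). split. apply (proj1 (Cmod_gt_0 _)). apply qpoch_nz; auto.
      intros n Hn. replace n with 0%nat by lia. lra.
    - destruct IHM as [c [Hc HM]].
      exists (Rmin c (Cmod (qpoch a r (S M)))). split.
      apply Rmin_glb_lt; auto. apply (proj1 (Cmod_gt_0 _)). apply qpoch_nz; auto.
      intros n Hn. destruct (Nat.eq_dec n (S M)) as [E|E].
      + subst. apply Rmin_r.
      + eapply Rle_trans. apply Rmin_l. apply HM. lia. }
  destruct (Hinit N) as [c [Hc HcN]].
  exists (c / 2)%R. split. lra. intros n.
  destruct (Compare_dec.le_lt_dec n N) as [Hn|Hn].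
  - eapply Rle_trans. 2: apply HcN; auto. lra.
  - replace n with (N + (n - N))%nat by lia. rewrite qpoch_add, Cmod_mult.
    assert (H1 := HcN N (le_n _)). assert (H2 := Htail (n - N)%nat).
    apply Rle_trans with (c * (1/2))%R. lra. apply Rmult_le_compat; lra.
Qed.
Fixpoint csum (f : nat -> C) (n : nat) : C :=
  match n with O => 0 | S m => csum f m + f m end.

Lemma csum_ext f g n : (forall i, (i < n)%nat -> f i = g i) -> csum f n = csum g n.
Proof. induction n; intros H; simpl. auto. rewrite IHn, H. auto. lia. intros; apply H; lia. Qed.

Lemma csum_plus f g n : csum (fun i => f i + g i) n = csum f n + csum g n.
Proof. induction n; simpl. ring. rewrite IHn. ring. Qed.

Lemma csum_minus f g n : csum (fun i => f i - g i) n = csum f n - csum g n.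
Proof. induction n; simpl. ring. rewrite IHn. ring. Qed.

Lemma csum_scal c f n : csum (fun i => c * f i) n = c * csum f n.
Proof. induction n; simpl. ring. rewrite IHn. ring. Qed.

Lemma csum_add f a b : csum f (a + b) = csum f a + csum (fun i => f (a + i)%nat) b.
Proof. induction b; simpl. rewrite Nat.add_0_r. ring. rewrite Nat.add_succ_r. simpl. rewrite IHb. ring. Qed.

Lemma csum_shift f n : csum f (S n) = f 0%nat + csum (fun i => f (S i)) n.
Proof. induction n. simpl. ring. change (csum f (S (S n))) with (csum f (S n) + f (S n)). rewrite IHn. simpl. ring. Qed.

Lemma csum_rev f n : csum f n = csum (fun i => f (n - 1 - i)%nat) n.
Proof.
  induction n. auto.
  change (csum f (S n)) with (csum f n + f n). rewrite IHn.
  rewrite (csum_shift (fun i => f (S n - 1 - i)%nat) n).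
  replace (S n - 1 - 0)%nat with n by lia.
  rewrite (csum_ext (fun i => f (n - 1 - i)%nat) (fun i => f (S n - 1 - S i)%nat)). ring.
  intros i Hi. f_equal. lia.
Qed.

Lemma sum_n_csum (f : nat -> C) n : sum_n f n = csum f (S n).
Proof. induction n. rewrite sum_O. simpl. ring. rewrite sum_Sn, IHn. reflexivity. Qed.

Lemma csum_bound f n K y a : (0 <= K)%R -> (0 <= y < 1)%R ->
  (forall i, (i < n)%nat -> (Cmod (f i) <= K * y ^ (a + i))%R) ->
  (Cmod (csum f n) <= K * y ^ a / (1 - y))%R.
Proof.
  intros HK Hy H.
  assert (G : (Cmod (csum f n) <= K * y ^ a * (1 - y ^ n) / (1 - y))%R).
  { induction n.
    - simpl. rewrite Cmod_0. replace (K * y ^ a * (1 - 1) / (1 - y))%R with 0%R by (field; lra). lra.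
    - simpl csum. eapply Rle_trans. apply Cmod_triangle.
      assert (H1 := H n ltac:(lia)). rewrite pow_add in H1.
      replace (K * y ^ a * (1 - y ^ S n) / (1 - y))%R with (K * y ^ a * (1 - y ^ n) / (1 - y) + K * (y ^ a * y ^ n))%R
        by (simpl; field; lra).
      assert (IH := IHn (fun i Hi => H i ltac:(lia))). lra. }
  eapply Rle_trans. apply G. unfold Rdiv. apply Rmult_le_compat_r. apply Rlt_le, Rinv_0_lt_compat. lra.
  assert (0 <= y ^ n)%R by (apply pow_le; lra). assert (0 <= y ^ a)%R by (apply pow_le; lra).
  assert (0 <= K * y ^ a)%R by (apply Rmult_le_pos; lra). nra.
Qed.

Lemma cv_csum (f : nat -> nat -> C) g J : (forall i, cv (fun n => f n i) (g i)) ->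
  cv (fun n => csum (f n) J) (csum g J).
Proof.
  intros H. induction J; simpl. apply cv_const. apply cv_plus; auto.
Qed.

Lemma series_cv (g : nat -> C) K y : (0 <= y < 1)%R -> (forall i, (Cmod (g i) <= K * y ^ i)%R) ->
  exists L, cv (fun n => csum g (S n)) L.
Proof.
  intros Hy H. destruct (incr_cv (fun n => csum g (S n)) (K * y)%R y Hy) as [L [HL _]].
  - intros n. change (csum g (S (S n))) with (csum g (S n) + g (S n)).
    replace (csum g (S n) + g (S n) - csum g (S n)) with (g (S n)) by ring.
    rewrite Rmult_assoc. exact (H (S n)).
  - exists L; auto.
Qed.

Lemma tannery (f : nat -> nat -> C) (g : nat -> C) (K y : R) : (0 <= y < 1)%R ->
  (forall n i, (i <= n)%nat -> (Cmod (f n i) <= K * y ^ i)%R) ->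
  (forall i, (Cmod (g i) <= K * y ^ i)%R) ->
  (forall i, cv (fun n => f n i) (g i)) ->
  cv (fun n => csum (f n) (S n) - csum g (S n)) 0.
Proof.
  intros Hy Hf Hg Hc eps He.
  assert (HK : (0 <= K)%R). { specialize (Hg 0%nat). simpl in Hg. assert (Hc0 := Cmod_ge_0 (g 0%nat)). lra. }
  destruct (geom_small y Hy (eps * (1 - y) / (4 * (K + 1)))%R) as [J HJ].
  { apply Rdiv_lt_0_compat. apply Rmult_lt_0_compat; lra. lra. }
  specialize (HJ J (le_n _)).
  destruct (cv_csum f g J Hc (eps / 2)%R ltac:(lra)) as [N1 HN1].
  exists (N1 + J)%nat. intros n Hn.
  specialize (HN1 n ltac:(lia)).
  replace (S n) with (J + (S n - J))%nat by lia. rewrite !csum_add.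
  replace (csum (f n) J + csum (fun i => f n (J + i)%nat) (S n - J) - (csum g J + csum (fun i => g (J + i)%nat) (S n - J)) - 0)
    with ((csum (f n) J - csum g J) + csum (fun i => f n (J + i)%nat - g (J + i)%nat) (S n - J))
    by (rewrite csum_minus; ring).
  eapply Rle_lt_trans. apply Cmod_triangle.
  assert (Ht : (Cmod (csum (fun i => (f n (J + i)%nat - g (J + i)%nat)%C) (S n - J)) <= (2 * K) * y ^ J / (1 - y))%R).
  { apply csum_bound; try lra. intros i Hi. eapply Rle_trans. apply Cmod_tri3.
    assert (A1 := Hf n (J + i)%nat ltac:(lia)). assert (A2 := Hg (J + i)%nat). lra. }
  assert (Hb : ((2 * K) * y ^ J / (1 - y) < eps / 2)%R).
  { apply Rle_lt_trans with (2 * (K + 1) * y ^ J / (1 - y))%R.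
    unfold Rdiv. apply Rmult_le_compat_r. apply Rlt_le, Rinv_0_lt_compat. lra.
    assert (0 <= y ^ J)%R by (apply pow_le; lra). nra.
    apply (Rmult_lt_reg_r ((1 - y) / (2 * (K + 1)))). apply Rdiv_lt_0_compat; lra.
    replace (2 * (K + 1) * y ^ J / (1 - y) * ((1 - y) / (2 * (K + 1))))%R with (y ^ J)%R by (field; lra).
    replace (eps / 2 * ((1 - y) / (2 * (K + 1))))%R with (eps * (1 - y) / (4 * (K + 1)))%R by (field; lra).
    exact HJ. }
  lra.
Qed.
Lemma one_minus_nz z : (Cmod z < 1)%R -> 1 - z <> 0.
Proof.
  intros H E. assert (z = 1). { apply (f_equal (fun t => 1 - t)) in E. ring_simplify in E. auto. }
  subst. rewrite Cmod_1 in H. lra.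
Qed.

Lemma Cmod_qpow q k : (Cmod q < 1)%R -> (0 < k)%nat -> (Cmod (q ^ k) < 1)%R.
Proof.
  intros H Hk. rewrite Cmod_pow. apply pow_lt_1_compat. split. apply Cmod_ge_0. auto. auto.
Qed.

Lemma pow_sq q j : (q ^ 2) ^ j = q ^ (2 * j).
Proof. rewrite Cpow_mult_r. auto. Qed.

Lemma R_fac_nz q j : (Cmod q < 1)%R -> 1 - q ^ 2 * (q ^ 2) ^ j <> 0.
Proof.
  intros H. rewrite pow_sq, <- Cpow_add_r. apply one_minus_nz, Cmod_qpow; auto. lia.
Qed.

Lemma P2_fac_nz q j : (Cmod q < 1)%R -> 1 - q * (q ^ 2) ^ j <> 0.
Proof.
  intros H. rewrite pow_sq. rewrite <- (Cpow_1_r q) at 1. rewrite <- Cpow_add_r. apply one_minus_nz, Cmod_qpow; auto. lia.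
Qed.

Lemma F_fac_nz q j : (Cmod q < 1)%R -> 1 - q * q ^ j <> 0.
Proof.
  intros H. rewrite <- (Cpow_1_r q) at 1. rewrite <- Cpow_add_r. apply one_minus_nz, Cmod_qpow; auto. lia.
Qed.

Definition ee (q z : C) (N : nat) : C := csum (fun m => z ^ m / qpoch (q ^ 2) (q ^ 2) m) (S N).

Lemma RR_nz q (hq1 : (Cmod q < 1)%R) n : qpoch (q ^ 2) (q ^ 2) n <> 0.
Proof. apply qpoch_nz. intros j. apply R_fac_nz; auto. Qed.

Lemma alpha_formula q (hq1 : (Cmod q < 1)%R) N : alpha q (S N) = q * qpoch (q ^ 2) (q ^ 2) N * ee q q N.
Proof.
  induction N.
  - unfold ee. simpl. field.
  - change (alpha q (S (S N))) with (q ^ (S (S N)) + (1 - q ^ (2 * S N)) * alpha q (S N)).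
    rewrite IHN. unfold ee. change (csum (fun m => q ^ m / qpoch (q ^ 2) (q ^ 2) m) (S (S N)))
      with (csum (fun m => q ^ m / qpoch (q ^ 2) (q ^ 2) m) (S N) + q ^ (S N) / qpoch (q ^ 2) (q ^ 2) (S N)).
    rewrite qpoch_S. rewrite <- pow_sq.
    assert (H1 := RR_nz q hq1 N). assert (H2 := R_fac_nz q N hq1).
    replace ((q ^ 2) ^ S N) with (q ^ 2 * (q ^ 2) ^ N) by (rewrite Cpow_S; auto).
    replace (q ^ S (S N)) with (q * q ^ S N) by (rewrite Cpow_S; auto).
    set (r := q ^ 2) in *. set (t := r ^ N) in *. field. split; auto.
Qed.



Lemma ee_step q z N (hq1 : (Cmod q < 1)%R) : ee q z (S N) - ee q (q ^ 2 * z) (S N) = z * ee q z N.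
Proof.
  unfold ee. rewrite (csum_shift _ (S N)). rewrite (csum_shift (fun m => (q ^ 2 * z) ^ m / qpoch (q ^ 2) (q ^ 2) m) (S N)).
  replace (z ^ 0 / qpoch (q ^ 2) (q ^ 2) 0 + csum (fun i => z ^ S i / qpoch (q ^ 2) (q ^ 2) (S i)) (S N) -
     ((q ^ 2 * z) ^ 0 / qpoch (q ^ 2) (q ^ 2) 0 + csum (fun i => (q ^ 2 * z) ^ S i / qpoch (q ^ 2) (q ^ 2) (S i)) (S N)))
    with (csum (fun i => z ^ S i / qpoch (q ^ 2) (q ^ 2) (S i) - (q ^ 2 * z) ^ S i / qpoch (q ^ 2) (q ^ 2) (S i)) (S N))
    by (rewrite csum_minus; simpl; ring).
  rewrite <- csum_scal. apply csum_ext. intros i _.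
  rewrite qpoch_S. assert (H1 := RR_nz q hq1 i). assert (H2 := R_fac_nz q i hq1).
  rewrite Cpow_mult_l. rewrite (Cpow_S (q ^ 2) i), (Cpow_S z i). set (r := q ^ 2) in *. set (t := r ^ i) in *.
  field. split; auto.
Qed.

Lemma ee_bound q w c0 N : (Cmod q < 1)%R -> (0 < c0)%R -> (forall n, (c0 <= Cmod (qpoch (q ^ 2) (q ^ 2) n))%R) ->
  (Cmod w < 1)%R -> (Cmod (ee q w N - 1) <= (/ c0) * Cmod w ^ 1 / (1 - Cmod w))%R.
Proof.
  intros hq1 Hc0 Hc Hw. unfold ee. rewrite csum_shift.
  replace (w ^ 0 / qpoch (q ^ 2) (q ^ 2) 0 + csum (fun i => w ^ S i / qpoch (q ^ 2) (q ^ 2) (S i)) N - 1)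
    with (csum (fun i => w ^ S i / qpoch (q ^ 2) (q ^ 2) (S i)) N) by (simpl; field; apply C1_nz).
  apply csum_bound. apply Rlt_le, Rinv_0_lt_compat; auto. split; [apply Cmod_ge_0|auto].
  intros i _. rewrite Cmod_div by apply RR_nz, hq1. rewrite Cmod_pow.
  unfold Rdiv. rewrite Rmult_comm. apply Rmult_le_compat. 
  - apply Rlt_le, Rinv_0_lt_compat. eapply Rlt_le_trans. apply Hc0. apply Hc.
  - apply pow_le, Cmod_ge_0.
  - apply Rinv_le_contravar; auto.
  - simpl. lra.
Qed.

Lemma ee_cv q w c0 : (Cmod q < 1)%R -> (0 < c0)%R -> (forall n, (c0 <= Cmod (qpoch (q ^ 2) (q ^ 2) n))%R) ->
  (Cmod w < 1)%R -> exists l, cv (ee q w) l.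
Proof.
  intros hq1 Hc0 Hc Hw. destruct (series_cv (fun m => w ^ m / qpoch (q ^ 2) (q ^ 2) m) (/ c0) (Cmod w)) as [l Hl].
  split; [apply Cmod_ge_0|auto].
  - intros i. rewrite Cmod_div by apply RR_nz, hq1. rewrite Cmod_pow.
    unfold Rdiv. rewrite Rmult_comm. apply Rmult_le_compat.
    + apply Rlt_le, Rinv_0_lt_compat. eapply Rlt_le_trans. apply Hc0. apply Hc.
    + apply pow_le, Cmod_ge_0.
    + apply Rinv_le_contravar; auto.
    + lra.
  - exists l. exact Hl.
Qed.

Lemma euler q E0 P2 c0 : (Cmod q < 1)%R -> (0 < c0)%R -> (forall n, (c0 <= Cmod (qpoch (q ^ 2) (q ^ 2) n))%R) ->
  cv (ee q q) E0 -> cv (qpoch q (q ^ 2)) P2 -> E0 * P2 = 1.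
Proof.
  intros hq1 Hc0 Hc HE HP.
  assert (HK : forall K, cv (ee q (q * (q ^ 2) ^ K)) (E0 * qpoch q (q ^ 2) K)).
  { induction K.
    - replace (q * (q ^ 2) ^ 0) with q by (simpl; ring). replace (E0 * qpoch q (q ^ 2) 0) with E0 by (simpl; ring). auto.
    - set (w := q * (q ^ 2) ^ K) in *.
      apply cv_S.
      apply cv_ext with (fun N => ee q w (S N) - w * ee q w N).
      { intros N. rewrite <- ee_step by auto. replace (q * (q ^ 2) ^ S K) with (q ^ 2 * w) by (unfold w; rewrite (Cpow_S (q ^ 2) K); ring). ring. }
      replace (E0 * qpoch q (q ^ 2) (S K)) with (E0 * qpoch q (q ^ 2) K - w * (E0 * qpoch q (q ^ 2) K))
        by (rewrite qpoch_S; unfold w; ring).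
      apply cv_minus. apply cv_comp with (k := 0%nat). auto. intros; lia.
      apply cv_mult. apply cv_const. auto. }
  set (x := Cmod q).
  assert (Hx : (0 <= x < 1)%R) by (split; [apply Cmod_ge_0|auto]).
  assert (Hw : forall K, (Cmod (q * (q ^ 2) ^ K) <= x ^ K)%R /\ (Cmod (q * (q ^ 2) ^ K) <= x)%R).
  { intros K. rewrite Cmod_mult, !Cmod_pow. fold x. rewrite <- pow_mult.
    assert (0 <= x ^ K)%R by (apply pow_le; lra).
    assert (x ^ S K <= 1)%R by (left; apply pow_lt_1_compat; [lra|lia]).
    assert (x ^ (2 * K) <= 1)%R by (destruct K; [simpl; lra|left; apply pow_lt_1_compat; [lra|lia]]).
    split.
    - replace (x * x ^ (2 * K))%R with (x ^ K * x ^ (S K))%R. nra.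
      rewrite <- pow_add. replace (K + S K)%nat with (S (2 * K)) by lia. reflexivity.
    - assert (0 <= x ^ (2 * K))%R by (apply pow_le; lra). nra. }
  assert (Hb : forall K, (Cmod (E0 * qpoch q (q ^ 2) K - 1) <= (/ c0 / (1 - x)) * x ^ K)%R).
  { intros K. destruct (Hw K) as [Hw1 Hw2].
    assert (Hlt : (Cmod (q * (q ^ 2) ^ K) < 1)%R) by lra.
    eapply Rle_trans. apply (cv_bound _ _ 1 _ (HK K)). intros N. apply (ee_bound q _ c0 N); auto.
    simpl pow. rewrite Rmult_1_r.
    unfold Rdiv. rewrite (Rmult_assoc (/ c0) (Cmod _)), (Rmult_assoc (/ c0) (/ (1 - x))).
    apply Rmult_le_compat_l. apply Rlt_le, Rinv_0_lt_compat; auto.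
    rewrite (Rmult_comm (/ (1 - x))).
    apply Rmult_le_compat. apply Cmod_ge_0. apply Rlt_le, Rinv_0_lt_compat. lra. auto.
    apply Rinv_le_contravar; lra. }
  assert (H1 : cv (fun K => E0 * qpoch q (q ^ 2) K) 1) by (apply (cv_geom _ _ (/ c0 / (1 - x)) x Hx Hb)).
  assert (H2 : cv (fun K => E0 * qpoch q (q ^ 2) K) (E0 * P2)) by (apply cv_mult; [apply cv_const|auto]).
  exact (cv_unique _ _ _ H2 H1).
Qed.
Fixpoint tri (k : nat) : nat := match k with O => O | S k' => (tri k' + k')%nat end.

Lemma tri_2 k : (2 * tri k + k = k * k)%nat.
Proof. induction k; simpl tri; nia. Qed.

Fixpoint gb (q : C) (N k : nat) : C :=
  match N, k with
  | _, O => 1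
  | O, S _ => 0
  | S N', S k' => gb q N' k' + q ^ (S k') * gb q N' (S k')
  end.

Lemma gb_zero q N k : (N < k)%nat -> gb q N k = 0.
Proof.
  revert k. induction N; intros k Hk; destruct k; try lia. reflexivity.
  simpl. rewrite !IHN by lia. ring.
Qed.

Lemma gb_0 q N : gb q N 0 = 1.
Proof. destruct N; reflexivity. Qed.

Lemma rothe q N x : qpoch x q N = csum (fun k => gb q N k * (- x) ^ k * q ^ tri k) (S N).
Proof.
  revert x. induction N; intros x.
  - simpl. ring.
  - set (h := fun k => gb q N k * (- (x * q)) ^ k * q ^ tri k).
    rewrite qpoch_shift, IHN. fold h.
    rewrite (csum_shift _ (S N)).
    rewrite (csum_ext (fun i => gb q (S N) (S i) * (- x) ^ (S i) * q ^ tri (S i)) (fun i => (- x) * h i + h (S i))).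
    2: { intros i _. unfold h. simpl gb. simpl tri.
         replace (- (x * q)) with ((- x) * q) by ring. rewrite !Cpow_mult_l, Cpow_add_r.
         rewrite (Cpow_S (- x) i), (Cpow_S q i). ring. }
    rewrite csum_plus, csum_scal.
    assert (E : csum (fun i => h (S i)) (S N) = csum h (S N) - h 0%nat).
    { assert (E1 := csum_shift h (S N)). change (csum h (S (S N))) with (csum h (S N) + h (S N)) in E1.
      assert (h (S N) = 0) by (unfold h; rewrite gb_zero by lia; ring).
      rewrite H in E1. replace (csum h (S N)) with (h 0%nat + csum (fun i => h (S i)) (S N)) by (rewrite <- E1; ring). ring. }
    rewrite E. unfold h. simpl. rewrite gb_0. ring.
Qed.

Lemma gb_fact q : forall N a b, (a + b = N)%nat -> gb q N a * qpoch q q a * qpoch q q b = qpoch q q N.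
Proof.
  induction N; intros a b Hab.
  - replace a with 0%nat by lia. replace b with 0%nat by lia. simpl. ring.
  - destruct a as [|a'].
    + simpl in Hab. subst b. simpl gb. simpl qpoch at 1. ring.
    + destruct b as [|b'].
      * replace a' with N by lia. simpl gb. rewrite (gb_zero q N (S N)) by lia.
        assert (IH := IHN N 0%nat ltac:(lia)). rewrite qpoch_S. simpl qpoch. simpl in IH.
        transitivity ((gb q N N * qpoch q q N * 1) * (1 - q * q ^ N)). ring. rewrite IH. ring.
      * assert (IH1 := IHN a' (S b') ltac:(lia)). assert (IH2 := IHN (S a') b' ltac:(lia)).
        transitivity ((gb q N a' * qpoch q q a' * qpoch q q (S b')) * (1 - q * q ^ a') +
                      q ^ (S a') * (gb q N (S a') * qpoch q q (S a') * qpoch q q b') * (1 - q * q ^ b')).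
        { simpl gb. rewrite (qpoch_S q q a'), (qpoch_S q q b'). rewrite (Cpow_S q a'). ring. }
        rewrite IH1, IH2. rewrite qpoch_S.
        replace N with (a' + S b')%nat by lia. rewrite Cpow_add_r, !Cpow_S. ring.
Qed.
Lemma tri_id1 n i : (i <= n)%nat -> (tri (n - i) + tri (S n) = n * (n - i) + tri (S i))%nat.
Proof.
  intros H. assert (A := tri_2 (n - i)). assert (B := tri_2 (S n)). assert (C := tri_2 (S i)).
  replace n with (i + (n - i))%nat in * by lia. set (m := (n - i)%nat) in *. clearbody m.
  replace (i + m - i)%nat with m in * by lia. nia.
Qed.
Lemma tri_id2 n i : (tri (S n + i) + tri (S n) = n * (S n + i) + tri (S i))%nat.
Proof.
  assert (A := tri_2 (S n + i)). assert (B := tri_2 (S n)). assert (C := tri_2 (S i)). nia.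
Qed.

Lemma pow_inv_mul (q : C) n m e1 e2 : q <> 0 -> (e1 = n * m + e2)%nat -> (/ q ^ n) ^ m * q ^ e1 = q ^ e2.
Proof.
  intros Hq He. subst. rewrite Cpow_inv by (apply Cpow_nz; auto).
  rewrite <- Cpow_mult_r, Cpow_add_r. field. apply Cpow_nz; auto.
Qed.

Lemma F_nz q n : (Cmod q < 1)%R -> qpoch q q n <> 0.
Proof. intros H. apply qpoch_nz. intros j. apply F_fac_nz; auto. Qed.

Lemma gb_div q N a b : (Cmod q < 1)%R -> (a + b = N)%nat -> gb q N a = qpoch q q N / (qpoch q q a * qpoch q q b).
Proof.
  intros H Hab. rewrite <- (gb_fact q N a b Hab). field. split; apply F_nz; auto.
Qed.

Lemma gauss_finite (q : C) n : q <> 0 -> (Cmod q < 1)%R ->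
  q ^ tri (S n) * qpoch (- / q ^ n) q (2 * n + 1) =
  csum (fun i => q ^ tri (S i) * (2 * qpoch q q (2 * n + 1) / (qpoch q q (n - i) * qpoch q q (S n + i)))) (S n).
Proof.
  intros Hq0 Hq1.
  rewrite rothe. rewrite <- csum_scal.
  set (t := fun k => q ^ tri (S n) * (gb q (2 * n + 1) k * (- - / q ^ n) ^ k * q ^ tri k)).
  replace (S (2 * n + 1)) with (S n + S n)%nat by lia.
  rewrite csum_add, (csum_rev t (S n)), <- csum_plus.
  apply csum_ext. intros i Hi. unfold t.
  replace (- - / q ^ n) with (/ q ^ n) by ring.
  replace (S n - 1 - i)%nat with (n - i)%nat by lia.
  rewrite (gb_div q (2 * n + 1) (n - i) (S n + i)) by (auto; lia).
  rewrite (gb_div q (2 * n + 1) (S n + i) (n - i)) by (auto; lia).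
  assert (E1 : (/ q ^ n) ^ (n - i) * q ^ (tri (n - i) + tri (S n)) = q ^ tri (S i))
    by (apply pow_inv_mul; auto; apply tri_id1; lia).
  assert (E2 : (/ q ^ n) ^ (S n + i) * q ^ (tri (S n + i) + tri (S n)) = q ^ tri (S i))
    by (apply pow_inv_mul; auto; apply tri_id2).
  rewrite (Cpow_add_r q (tri (n - i)) (tri (S n))) in E1.
  rewrite (Cpow_add_r q (tri (S n + i)) (tri (S n))) in E2.
  assert (H1 := F_nz q (n - i) Hq1). assert (H2 := F_nz q (S n + i) Hq1).
  transitivity (qpoch q q (2 * n + 1) / (qpoch q q (n - i) * qpoch q q (S n + i)) *
     ((/ q ^ n) ^ (n - i) * (q ^ tri (n - i) * q ^ tri (S n))) +
     qpoch q q (2 * n + 1) / (qpoch q q (n - i) * qpoch q q (S n + i)) *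
     ((/ q ^ n) ^ (S n + i) * (q ^ tri (S n + i) * q ^ tri (S n)))).
  field. split; auto.
  rewrite E1, E2. field. split; auto.
Qed.

Lemma V_id (q : C) n : q <> 0 ->
  q ^ tri (S n) * qpoch (- / q ^ n) q (2 * n + 1) * qpoch q q n ^ 2 = 2 * qpoch (q ^ 2) (q ^ 2) n ^ 2.
Proof.
  intros Hq. induction n.
  - simpl. field.
  - change (tri (S (S n))) with (tri (S n) + S n)%nat. rewrite Cpow_add_r.
    replace (2 * S n + 1)%nat with (S (S (2 * n + 1))) by lia.
    rewrite qpoch_shift, qpoch_S.
    replace (- / q ^ S n * q) with (- / q ^ n) by (rewrite Cpow_S; field; split; auto; apply Cpow_nz; auto).
    rewrite !qpoch_S.
    set (A := q ^ tri (S n)) in *. set (Q := qpoch (- / q ^ n) q (2 * n + 1)) in *.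
    set (Fn := qpoch q q n) in *. set (Rn := qpoch (q ^ 2) (q ^ 2) n) in *.
    replace (q ^ (2 * n + 1)) with (q * q ^ n * q ^ n) by (replace (2 * n + 1)%nat with (n + n + 1)%nat by lia; rewrite !Cpow_add_r; simpl; ring).
    replace ((q ^ 2) ^ n) with (q ^ n * q ^ n) by (rewrite pow_sq; replace (2 * n)%nat with (n + n)%nat by lia; rewrite !Cpow_add_r; ring).
    rewrite Cpow_S.
    assert (Ht : q ^ n <> 0) by (apply Cpow_nz; auto).
    set (t := q ^ n) in *.
    transitivity ((A * Q * Fn ^ 2) * ((1 + q * t) ^ 2 * (1 - q * t) ^ 2)).
    field. split; auto.
    rewrite IHn. ring.
Qed.

Lemma F2_id (q : C) n : qpoch q q (2 * n) = qpoch q (q ^ 2) n * qpoch (q ^ 2) (q ^ 2) n.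
Proof.
  induction n.
  - simpl. ring.
  - replace (2 * S n)%nat with (S (S (2 * n))) by lia. rewrite !qpoch_S, IHn.
    rewrite !pow_sq. replace (2 * S n)%nat with (S (S (2 * n)))%nat by lia.
    rewrite !Cpow_S. ring.
Qed.
Lemma pow_le1 (x : R) n : (0 <= x <= 1)%R -> (x ^ n <= 1)%R.
Proof. intros Hx. induction n. simpl; lra. simpl. assert (0 <= x ^ n)%R by (apply pow_le; lra). nra. Qed.

Lemma pow_decr (x : R) a b : (0 <= x <= 1)%R -> (b <= a)%nat -> (x ^ a <= x ^ b)%R.
Proof.
  intros Hx Hab. replace a with (b + (a - b))%nat by lia. rewrite pow_add.
  assert (0 <= x ^ b)%R by (apply pow_le; lra). assert (x ^ (a - b) <= 1)%R by (apply pow_le1; lra).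
  nra.
Qed.

Lemma gauss_limit (q P1 P2 Q : C) : q <> 0 -> (Cmod q < 1)%R ->
  cv (qpoch (q ^ 2) (q ^ 2)) P1 -> cv (qpoch q (q ^ 2)) P2 -> cv (qpoch q q) Q -> P2 <> 0 -> Q <> 0 ->
  exists Sg, cv (fun n => csum (fun i => q ^ tri (S i)) (S n)) Sg /\ Sg = P1 / P2.
Proof.
  intros Hq0 Hq1 HP1 HP2 HQ HP2n HQn.
  set (x := Cmod q).
  assert (Hx : (0 <= x < 1)%R) by (split; [apply Cmod_ge_0|auto]).
  destruct (qpoch_lower q q Hq1 (fun j => F_fac_nz q j Hq1)) as [c [Hc Hcl]].
  set (B := exp (Cmod q / (1 - Cmod q))).
  assert (HB : forall n, (Cmod (qpoch q q n) <= B)%R) by (intros; apply qpoch_bound; auto).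
  assert (Hc1 : (c <= 1)%R) by (specialize (Hcl 0%nat); simpl in Hcl; rewrite Cmod_1 in Hcl; auto).
  assert (HB1 : (1 <= B)%R) by (specialize (HB 0%nat); simpl in HB; rewrite Cmod_1 in HB; auto).
  set (K := (B * B / (c * c))%R).
  assert (HK1 : (1 <= K)%R).
  { unfold K. apply (Rmult_le_reg_r (c * c)). nra. unfold Rdiv. rewrite Rmult_assoc, Rinv_l by nra. nra. }
  set (g := fun i => q ^ tri (S i)).
  set (f := fun n i => q ^ tri (S i) * (qpoch q q n * qpoch q q (S n) / (qpoch q q (n - i) * qpoch q q (S n + i)))).
  assert (Hg : forall i, (Cmod (g i) <= K * x ^ i)%R).
  { intros i. unfold g. rewrite Cmod_pow. fold x.
    apply Rle_trans with (x ^ i)%R. apply pow_decr. lra. simpl. lia.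
    assert (0 <= x ^ i)%R by (apply pow_le; lra). nra. }
  assert (Hf : forall n i, (i <= n)%nat -> (Cmod (f n i) <= K * x ^ i)%R).
  { intros n i _. unfold f. rewrite Cmod_mult, Cmod_div, !Cmod_mult, Cmod_pow.
    2: { apply Cmult_neq_0; apply F_nz; auto. }
    fold x. rewrite Rmult_comm. apply Rmult_le_compat.
    - apply Rmult_le_pos. apply Rmult_le_pos; apply Cmod_ge_0. apply Rlt_le, Rinv_0_lt_compat.
      apply Rmult_lt_0_compat; apply (proj1 (Cmod_gt_0 _)); apply F_nz; auto.
    - apply pow_le; lra.
    - unfold K, Rdiv. apply Rmult_le_compat.
      + apply Rmult_le_pos; apply Cmod_ge_0.
      + apply Rlt_le, Rinv_0_lt_compat. apply Rmult_lt_0_compat; apply (proj1 (Cmod_gt_0 _)); apply F_nz; auto.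
      + apply Rmult_le_compat; try apply Cmod_ge_0; auto.
      + apply Rinv_le_contravar. nra. apply Rmult_le_compat; lra || auto.
    - apply pow_decr. lra. simpl. lia. }
  assert (Hfc : forall i, cv (fun n => f n i) (g i)).
  { intros i. unfold g.
    assert (E : q ^ tri (S i) = q ^ tri (S i) * (Q * Q * / (Q * Q))) by (field; auto).
    rewrite E.
    apply cv_ext with (fun n => q ^ tri (S i) * ((qpoch q q n * qpoch q q (S n)) * / (qpoch q q (n - i) * qpoch q q (S n + i)))).
    { intros n. unfold f. reflexivity. }
    apply cv_mult. apply cv_const.
    apply cv_mult. apply cv_mult. auto. refine (cv_comp (qpoch q q) Q S 0 HQ _); intros; lia.
    apply cv_inv. apply Cmult_neq_0; auto.
    apply cv_mult. refine (cv_comp (qpoch q q) Q (fun n => n - i)%nat i HQ _); intros; lia.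
    refine (cv_comp (qpoch q q) Q (fun n => S n + i)%nat 0 HQ _); intros; lia. }
  destruct (series_cv g K x Hx Hg) as [Sg HS].
  exists Sg. split. exact HS.
  assert (HT := tannery f g K x Hx Hf Hg Hfc).
  assert (Hsum : cv (fun n => csum (f n) (S n)) Sg).
  { apply cv_ext with (fun n => (csum (f n) (S n) - csum g (S n)) + csum g (S n)).
    intros; ring. replace Sg with (0 + Sg) by ring. apply cv_plus; auto. }
  assert (Hid : forall n, csum (f n) (S n) =
     qpoch (q ^ 2) (q ^ 2) n * qpoch q q (S n) * / (qpoch q q n * qpoch q (q ^ 2) n * (1 - q * q ^ (2 * n)))).
  { intros n.
    assert (HV := gauss_finite q n Hq0 Hq1). assert (HV2 := V_id q n Hq0).
    assert (E : csum (f n) (S n) = (qpoch q q n * qpoch q q (S n) / (2 * qpoch q q (2 * n + 1))) *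
       csum (fun i => q ^ tri (S i) * (2 * qpoch q q (2 * n + 1) / (qpoch q q (n - i) * qpoch q q (S n + i)))) (S n)).
    { rewrite <- csum_scal. apply csum_ext. intros i _. unfold f.
      assert (H1 := F_nz q (n - i) Hq1). assert (H2 := F_nz q (S n + i) Hq1). assert (H3 := F_nz q (2 * n + 1) Hq1).
      field. repeat split; auto. }
    rewrite E, <- HV.
    replace (2 * n + 1)%nat with (S (2 * n)) by lia. rewrite (qpoch_S q q (2 * n)), F2_id.
    replace (S (2 * n)) with (2 * n + 1)%nat in HV2 |- * by lia.
    assert (H1 := F_nz q n Hq1). assert (H2 : qpoch q (q ^ 2) n <> 0) by (apply qpoch_nz; intros; apply P2_fac_nz; auto).
    assert (H3 : qpoch (q ^ 2) (q ^ 2) n <> 0) by (apply RR_nz; auto).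
    assert (H4 := F_fac_nz q (2 * n) Hq1).
    set (Vn := q ^ tri (S n) * qpoch (- / q ^ n) q (2 * n + 1)) in *.
    assert (HVn : Vn = 2 * qpoch (q ^ 2) (q ^ 2) n ^ 2 / qpoch q q n ^ 2).
    { rewrite <- HV2. field. auto. }
    assert (e : S (2 * n) = (2 * n + 1)%nat) by lia. rewrite e. fold Vn. rewrite HVn. field. repeat split; auto. }
  assert (Hlim : cv (fun n => csum (f n) (S n)) (P1 * Q * / (Q * P2 * 1))).
  { apply cv_ext with (fun n => qpoch (q ^ 2) (q ^ 2) n * qpoch q q (S n) * / (qpoch q q n * qpoch q (q ^ 2) n * (1 - q * q ^ (2 * n)))).
    intros; rewrite Hid; auto.
    apply cv_mult. apply cv_mult. auto. refine (cv_comp (qpoch q q) Q S 0 HQ _); intros; lia.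
    apply cv_inv. apply Cmult_neq_0. apply Cmult_neq_0; auto. apply C1_nz.
    apply cv_mult. apply cv_mult; auto.
    apply (cv_geom _ _ 1 x Hx). intros n.
    replace (1 - q * q ^ (2 * n) - 1) with (- (q * q ^ (2 * n))) by ring.
    rewrite Cmod_opp, Cmod_mult, Cmod_pow. fold x. rewrite Rmult_1_l.
    rewrite <- (pow_1 x) at 1. rewrite <- pow_add. apply pow_decr. lra. lia. }
  rewrite (cv_unique _ _ _ Hsum Hlim). field. auto.
Qed.
Lemma div_tri n : Nat.div (n * (n + 1)) 2 = tri (S n).
Proof.
  assert (H := tri_2 (S n)).
  replace (n * (n + 1))%nat with (tri (S n) * 2)%nat by nia.
  apply Nat.div_mul. lia.
Qed.
Theorem corollary4p2 (q : C) (hq0 : (0 < Cmod q)%R) (hq1 : (Cmod q < 1)%R) :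
  exists L P1 P2 S : C,
    filterlim (alpha q) eventually (locally L) /\
    qpoch_inf_is (q ^ 2) (q ^ 2) P1 /\
    qpoch_inf_is q (q ^ 2) P2 /\
    P2 <> 0 /\
    is_series (fun n : nat => q ^ (Nat.div (n * (n + 1)) 2)) S /\
    / q * L = P1 / P2 /\
    P1 / P2 = S.
Proof.
  assert (Hq0 : q <> 0) by (intro E; rewrite E, Cmod_0 in hq0; lra).
  assert (Hr : (Cmod (q ^ 2) < 1)%R) by (apply Cmod_qpow; auto).
  destruct (qpoch_cv (q ^ 2) (q ^ 2) Hr) as [P1 HP1].
  destruct (qpoch_cv q (q ^ 2) Hr) as [P2 HP2].
  destruct (qpoch_cv q q hq1) as [Q HQ].
  destruct (qpoch_lower (q ^ 2) (q ^ 2) Hr (fun j => R_fac_nz q j hq1)) as [cR [HcR HcRl]].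
  destruct (qpoch_lower q q hq1 (fun j => F_fac_nz q j hq1)) as [cF [HcF HcFl]].
  destruct (ee_cv q q cR hq1 HcR HcRl hq1) as [E0 HE0].
  assert (Heul := euler q E0 P2 cR hq1 HcR HcRl HE0 HP2).
  assert (HP2n : P2 <> 0).
  { intro E. rewrite E in Heul. apply C1_nz. rewrite <- Heul. ring. }
  assert (HQn : Q <> 0).
  { intro E. assert (H := cv_lower _ _ _ HQ HcFl). rewrite E, Cmod_0 in H. lra. }
  destruct (gauss_limit q P1 P2 Q Hq0 hq1 HP1 HP2 HQ HP2n HQn) as [Sg [HS HSg]].
  assert (HE : E0 = / P2).
  { replace E0 with (E0 * P2 * / P2) by (field; auto). rewrite Heul. ring. }
  exists (q * P1 * E0), P1, P2, Sg.
  split; [|split; [|split; [|split; [|split; [|split]]]]].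
  - apply cv_filterlim. apply cv_S.
    apply cv_ext with (fun N => q * qpoch (q ^ 2) (q ^ 2) N * ee q q N).
    { intros N. rewrite alpha_formula; auto. }
    apply cv_mult; auto. apply cv_mult; auto. apply cv_const.
  - apply cv_filterlim. exact HP1.
  - apply cv_filterlim. exact HP2.
  - exact HP2n.
  - unfold is_series. apply cv_filterlim.
    apply cv_ext with (fun n => csum (fun i => q ^ tri (S i)) (S n)).
    { intros n. rewrite sum_n_csum. apply csum_ext. intros i _. rewrite div_tri. reflexivity. }
    exact HS.
  - rewrite HE. field. auto.
  - symmetry. exact HSg.
Qed.
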